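(* Let $(\mathcal{E},U,P)$ be a BCL triple with associated BCL pair $(V_1,V_2)$ on $H^2_{\mathcal{E}}(\mathbb{D})$, and let $\mathcal{S}$ be a closed subspace of $H^2_{\mathcal{E}}(\mathbb{D})$. Then $\mathcal{S}$ is reducing for both $V_1$ and $V_2$ if and only if there exists a closed subspace $\tilde{\mathcal{E}}\subseteq\mathcal{E}$ which is reducing for both $U$ and $P$ such that $\mathcal{S}=H^2_{\tilde{\mathcal{E}}}(\mathbb{D})$ (the $\tilde{\mathcal E}$-valued Hardy space, viewed as a subspace of $H^2_{\mathcal{E}}(\mathbb{D})$).
   Context: All Hilbert spaces are complex and separable; ''projection'' means orthogonal projection and $P^\perp=I-P$. $H^2(\mathbb{D})$ is the Hardy space of the open unit disc, $M_z$ is multiplication by $z$, and for a Hilbert space $\mathcal{E}$, $H^2_{\mathcal{E}}(\mathbb{D})$ is the $\mathcal{E}$-valued Hardy space, identified with $H^2(\mathbb{D})\otimes\mathcal{E}$ via $z^m\eta\mapsto z^m\otimes\eta$. A BCL triple is a triple $(\mathcal{E},U,P)$ where $\mathcal{E}$ is a Hilbert space, $U$ is a unitary on $\mathcal{E}$ and $P$ is a projection on $\mathcal{E}$. The BCL pair associated with it is the pair of commuting isometries on $H^2(\mathbb{D})\otimes\mathcal{E}$ $V_1=(I_{H^2}\otimes P+M_z\otimes P^\perp)(I_{H^2}\otimes U^* )$, $V_2=(I_{H^2}\otimes U)(M_z\otimes P+I_{H^2}\otimes P^\perp)$ (so $V_1V_2=V_2V_1=M_z\otimes I_{\mathcal{E}}$).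 *)

(* Defs.v *)
From HB Require Import structures.
From mathcomp Require Import all_boot all_order all_algebra.
From mathcomp Require Import complex.
From mathcomp Require Import all_classical reals topology normedtype sequences.

Set Implicit Arguments.
Unset Strict Implicit.
Unset Printing Implicit Defensive.

Import Order.TTheory GRing.Theory Num.Theory numFieldNormedType.Exports.
Local Open Scope ring_scope.
Local Open Scope classical_set_scope.

(* A Hilbert space is an lmodType over C with an inner product (linear in the
   first variable, conjugate symmetric, positive definite) whose induced norm
   is complete; we also record separability (standing assumption).          *)

Definition inner_product (R : realType) (E : lmodType R[i])
  (ip : E -> E -> R[i]) : Prop :=
  [/\ forall (a : R[i]) (x y z : E), ip (a *: x + y) z = a * ip x z + ip y z,
      forall x y : E, ip y x = conjc (ip x y),
      forall x : E, 0 <= ip x x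
    & forall x : E, ip x x = 0 -> x = 0].

Definition hnorm (R : realType) (E : lmodType R[i]) (ip : E -> E -> R[i])
  (x : E) : R := Num.sqrt (complex.Re (ip x x)).

Definition hconv (R : realType) (E : lmodType R[i]) (ip : E -> E -> R[i])
  (u : nat -> E) (x : E) : Prop :=
  forall eps : R, 0 < eps -> exists N : nat, forall n : nat,
    (N <= n)%N -> hnorm ip (u n - x) < eps.

Definition hcauchy (R : realType) (E : lmodType R[i]) (ip : E -> E -> R[i])
  (u : nat -> E) : Prop :=
  forall eps : R, 0 < eps -> exists N : nat, forall n m : nat,
    (N <= n)%N -> (N <= m)%N -> hnorm ip (u n - u m) < eps.

Definition is_hilbert (R : realType) (E : lmodType R[i])
  (ip : E -> E -> R[i]) : Prop :=
  [/\ inner_product ip,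
      forall u : nat -> E, hcauchy ip u -> exists x : E, hconv ip u x
    &
      exists d : nat -> E, forall (x : E) (eps : R), 0 < eps ->
        exists n : nat, hnorm ip (x - d n) < eps].

Definition closed_subspace (R : realType) (E : lmodType R[i])
  (ip : E -> E -> R[i]) (F : set E) : Prop :=
  [/\ F 0,
      forall (a : R[i]) (x y : E), F x -> F y -> F (a *: x + y)
    & forall (u : nat -> E) (x : E), (forall n, F (u n)) -> hconv ip u x -> F x].

(* Adjoints and reducing subspaces, relative to an inner product  ip  on a
   domain  D  (the whole space, or the Hardy space inside  nat -> E).      *)

Definition is_adjoint_on (R : realType) (X : Type) (ip : X -> X -> R[i])
  (D : set X) (T Ts : X -> X) : Prop :=
  forall x y : X, D x -> D y -> D (Ts y) /\ ip (T x) y = ip x (Ts y).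

Definition reducing_on (R : realType) (X : Type) (ip : X -> X -> R[i])
  (D : set X) (T : X -> X) (S : set X) : Prop :=
  (forall x, S x -> S (T x)) /\
  exists Ts : X -> X, is_adjoint_on ip D T Ts /\ (forall x, S x -> S (Ts x)).

Definition is_linear_op (R : realType) (E : lmodType R[i]) (T : E -> E) : Prop :=
  forall (a : R[i]) (x y : E), T (a *: x + y) = a *: T x + T y.

Definition unitary_with_adjoint (R : realType) (E : lmodType R[i])
  (ip : E -> E -> R[i]) (U Us : E -> E) : Prop :=
  [/\ is_linear_op U, is_adjoint_on ip setT U Us,
      forall x, U (Us x) = x & forall x, Us (U x) = x].

Definition orth_projection (R : realType) (E : lmodType R[i])
  (ip : E -> E -> R[i]) (P : E -> E) : Prop :=
  [/\ is_linear_op P, forall x, P (P x) = P x & is_adjoint_on ip setT P P].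

(* The E-valued Hardy space  H^2_E(D) = H^2(D) (x) E , realised through the
   identification  z^m eta <-> (m-th Taylor coefficient eta), i.e. as
   square-summable coefficient sequences  f : nat -> E .                  *)

Definition in_H2 (R : realType) (E : lmodType R[i]) (ip : E -> E -> R[i])
  (f : nat -> E) : Prop :=
  exists M : R, forall n : nat, \sum_(m < n) hnorm ip (f m) ^+ 2 <= M.

Definition H2inner (R : realType) (E : lmodType R[i]) (ip : E -> E -> R[i])
  (f g : nat -> E) : R[i] :=
  Complex (limn (fun n => \sum_(m < n) complex.Re (ip (f m) (g m))))
          (limn (fun n => \sum_(m < n) complex.Im (ip (f m) (g m)))).

Definition H2norm (R : realType) (E : lmodType R[i]) (ip : E -> E -> R[i])
  (f : nat -> E) : R :=
  Num.sqrt (limn (fun n => \sum_(m < n) hnorm ip (f m) ^+ 2)).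

Definition H2_closed_subspace (R : realType) (E : lmodType R[i])
  (ip : E -> E -> R[i]) (S : set (nat -> E)) : Prop :=
  [/\ S `<=` in_H2 ip,
      S (fun _ => 0),
      forall (a : R[i]) (f g : nat -> E), S f -> S g ->
        S (fun m => a *: f m + g m)
    & forall (u : nat -> nat -> E) (f : nat -> E),
        (forall k, S (u k)) -> in_H2 ip f ->
        (forall eps : R, 0 < eps -> exists N : nat, forall k : nat,
            (N <= k)%N -> H2norm ip (fun m => u k m - f m) < eps) ->
        S f].

Definition H2_of (R : realType) (E : lmodType R[i]) (ip : E -> E -> R[i])
  (Et : set E) : set (nat -> E) :=
  [set f | in_H2 ip f /\ forall m, Et (f m)].

(* The BCL pair of the BCL triple (E, U, P) (Us = adjoint of U, P^perp = I - P):
     V1 = (I (x) P + M_z (x) P^perp)(I (x) Ustar)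
     V2 = (I (x) U)(M_z (x) P + I (x) P^perp)
   acting on coefficient sequences ( (M_z f)_0 = 0, (M_z f)_{m+1} = f_m ). *)

Definition shift (R : realType) (E : lmodType R[i]) (f : nat -> E) : nat -> E :=
  fun m => if m is m'.+1 then f m' else 0.

Definition BCL_V1 (R : realType) (E : lmodType R[i]) (Us P : E -> E)
  (f : nat -> E) : nat -> E :=
  fun m => P (Us (f m)) + shift (fun k => Us (f k) - P (Us (f k))) m.

Definition BCL_V2 (R : realType) (E : lmodType R[i]) (U P : E -> E)
  (f : nat -> E) : nat -> E :=
  fun m => U (shift (fun k => P (f k)) m + (f m - P (f m))).

(* Main.v *)
Require Import Defs.
From HB Require Import structures.
From mathcomp Require Import all_boot all_order all_algebra.
From mathcomp Require Import complex.
From mathcomp Require Import all_classical reals topology normedtype sequences.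
From mathcomp Require Import ring lra.
Set Implicit Arguments.
Unset Strict Implicit.
Unset Printing Implicit Defensive.
Import Order.TTheory GRing.Theory Num.Theory numFieldNormedType.Exports.
Local Open Scope ring_scope.
Local Open Scope classical_set_scope.

Section IP.
Variables (R : realType) (E : lmodType R[i]) (ip : E -> E -> R[i]).
Hypothesis Hip : inner_product ip.

Lemma ReD (x y : R[i]) : complex.Re (x + y) = complex.Re x + complex.Re y.
Proof. by case: x; case: y. Qed.
Lemma ImD (x y : R[i]) : complex.Im (x + y) = complex.Im x + complex.Im y.
Proof. by case: x; case: y. Qed.
Lemma ReN (x : R[i]) : complex.Re (- x) = - complex.Re x.
Proof. by case: x. Qed.
Lemma ImN (x : R[i]) : complex.Im (- x) = - complex.Im x.
Proof. by case: x. Qed.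
Lemma Reconj (x : R[i]) : complex.Re (conjc x) = complex.Re x.
Proof. by case: x. Qed.
Lemma conjD (x y : R[i]) : conjc (x + y) = conjc x + conjc y.
Proof. by case: x; case: y => /= *; rewrite opprD. Qed.
Lemma conj0 : conjc (0 : R[i]) = 0.
Proof. by rewrite /= oppr0. Qed.
Lemma conjN (x : R[i]) : conjc (- x) = - conjc x.
Proof. by case: x. Qed.

Lemma ipZDl a x y z : ip (a *: x + y) z = a * ip x z + ip y z.
Proof. by case: Hip. Qed.
Lemma ip_sym x y : ip y x = conjc (ip x y).
Proof. by case: Hip. Qed.
Lemma ipDl x y z : ip (x + y) z = ip x z + ip y z.
Proof. by rewrite -[x]scale1r ipZDl mul1r scale1r. Qed.
Lemma ip0l z : ip 0 z = 0.
Proof. have h := ipDl 0 0 z; rewrite addr0 in h; apply: (@addrI _ (ip 0 z)); by rewrite addr0 -h. Qed.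
Lemma ipZl a x z : ip (a *: x) z = a * ip x z.
Proof. by rewrite -[a *: x]addr0 ipZDl ip0l addr0. Qed.
Lemma ipNl x z : ip (- x) z = - ip x z.
Proof. by rewrite -scaleN1r ipZl mulN1r. Qed.
Lemma ipBl x y z : ip (x - y) z = ip x z - ip y z.
Proof. by rewrite ipDl ipNl. Qed.
Lemma ipDr x y z : ip z (x + y) = ip z x + ip z y.
Proof. by rewrite ip_sym ipDl conjD -!ip_sym. Qed.
Lemma ip0r z : ip z 0 = 0.
Proof. by rewrite ip_sym ip0l conj0. Qed.
Lemma ipNr x z : ip z (- x) = - ip z x.
Proof. by rewrite ip_sym ipNl conjN -ip_sym. Qed.
Lemma ipBr x y z : ip z (x - y) = ip z x - ip z y.
Proof. by rewrite ipDr ipNr. Qed.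

Definition q v := complex.Re (ip v v).

Lemma ipvv_ge0 v : 0 <= ip v v. Proof. by case: Hip. Qed.
Lemma q_ge0 v : 0 <= q v.
Proof. by have := ipvv_ge0 v; rewrite lecE => /andP[]. Qed.
Lemma Im_ipvv v : complex.Im (ip v v) = 0.
Proof. by have := ipvv_ge0 v; rewrite lecE => /andP[/eqP ->]. Qed.
Lemma hnorm2 v : hnorm ip v ^+ 2 = q v.
Proof. by rewrite /hnorm sqr_sqrtr // q_ge0. Qed.
Lemma hnorm_ge0 v : 0 <= hnorm ip v.
Proof. exact: sqrtr_ge0. Qed.
Lemma q0 : q 0 = 0.
Proof. by rewrite /q ip0l. Qed.
Lemma q_eq0 v : q v = 0 -> v = 0.
Proof.
move=> h; case: Hip => _ _ _; apply.
by move: h (Im_ipvv v); rewrite /q; case: (ip v v) => a b /= -> ->.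
Qed.

Lemma ReSym x y : complex.Re (ip y x) = complex.Re (ip x y).
Proof. by rewrite ip_sym Reconj. Qed.

Lemma qD x y : q (x + y) = q x + q y + 2 * complex.Re (ip x y).
Proof.
rewrite /q ipDl !ipDr !ReD; have -> := ReSym x y; ring.
Qed.
Lemma qB x y : q (x - y) = q x + q y - 2 * complex.Re (ip x y).
Proof.
rewrite /q ipBl !ipBr !(ReD, ReN); have -> := ReSym x y; ring.
Qed.
Lemma qD_le x y : q (x + y) <= 2 * q x + 2 * q y.
Proof. have := q_ge0 (x - y); rewrite qB qD; lra. Qed.
Lemma Re_ip_le x y : 2 * `|complex.Re (ip x y)| <= q x + q y.
Proof.
have := q_ge0 (x - y); have := q_ge0 (x + y); rewrite qB qD.
case: (ler0P (complex.Re (ip x y))) => _; lra.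
Qed.

Definition mi : R[i] := Complex 0 (-1).
Lemma Im_ip_le x y : 2 * `|complex.Im (ip x y)| <= q x + q y.
Proof.
have -> : complex.Im (ip x y) = complex.Re (ip (mi *: x) y).
  by rewrite ipZl; case: (ip x y) => a b /=; ring.
have -> : q x = q (mi *: x).
  rewrite /q ipZl (ip_sym (mi *: x)) ipZl.
  by move: (Im_ipvv x); case: (ip x x) => a b /= ->; ring.
exact: Re_ip_le.
Qed.
End IP.

Section Real.
Variable R : realType.
Definition tends (u : nat -> R) (l : R) := forall eps : R, 0 < eps ->
  exists N : nat, forall n : nat, (N <= n)%N -> `|u n - l| < eps.

Lemma tendsP (u : nat -> R) l : tends u l <-> u @ \oo --> l.
Proof.
split.
- move=> H; apply/cvgrPdist_lt => e e0.
  have [N HN] := H e e0.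
  exists N => // n /= Nn. by rewrite distrC; apply: HN.
- move=> /cvgrPdist_lt H e e0.
  have [N _ HN] := H e e0.
  exists N => n Nn. rewrite distrC; exact: HN.
Qed.

Lemma limn_ext (u v : nat -> R) :
  (forall l : R, u @ \oo --> l <-> v @ \oo --> l) -> limn u = limn v.
Proof.
move=> H. rewrite /lim /lim_in.
have -> : (fun l : R => u @ \oo --> l) = (fun l : R => v @ \oo --> l).
  apply: funext => l; apply: propext; exact: H.
by [].
Qed.

Lemma limn_diff (u v c : nat -> R) :
  (forall n, u n = v n - c n) -> tends c 0 -> limn u = limn v.
Proof.
move=> huv /tendsP hc; apply: limn_ext => l; split => hl.
- have -> : v = (u \+ c) by apply: funext => n /=; rewrite huv subrK.
  rewrite -(addr0 l); exact: cvgD hl hc.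
- have -> : u = (v \- c) by apply: funext => n /=; rewrite huv.
  rewrite -(subr0 l); exact: cvgB hl hc.
Qed.

Lemma limn_evconst (u : nat -> R) (a : R) (N : nat) :
  (forall n, (N <= n)%N -> u n = a) -> limn u = a.
Proof.
move=> h; apply: cvg_lim => //; apply: cvg_near_cst.
exists N => // n /= Nn; exact: h.
Qed.
End Real.

Section H2.
Variables (R : realType) (E : lmodType R[i]) (ip : E -> E -> R[i]).
Hypothesis Hip : inner_product ip.

Lemma inH2P f : in_H2 ip f <-> exists M, forall n, \sum_(m < n) q ip (f m) <= M.
Proof.
have e n : \sum_(m < n) hnorm ip (f m) ^+ 2 = \sum_(m < n) q ip (f m).
  by apply: eq_bigr => i _; exact: hnorm2.
by split => -[M HM]; exists M => n; move: (HM n); rewrite e.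
Qed.

Lemma inH2_cvg f : in_H2 ip f -> cvgn (series (fun m => q ip (f m))).
Proof.
move=> /inH2P [M HM]; apply: nondecreasing_is_cvgn.
  have := @nondecreasing_series R (fun m => q ip (f m)) predT 0.
  by apply => n _ _; exact: q_ge0.
exists M => _ [n _ <-] /=; rewrite seriesEord; exact: HM.
Qed.

Lemma inH2_tends0 f : in_H2 ip f -> tends (fun n => q ip (f n)) 0.
Proof. by move=> /inH2_cvg /cvg_series_cvg_0 h; apply/tendsP. Qed.
End H2.

Section Lin.
Variables (R : realType) (E : lmodType R[i]).
Variable T : E -> E.
Hypothesis HT : is_linear_op T.
Lemma linD x y : T (x + y) = T x + T y.
Proof. by rewrite -[x]scale1r HT !scale1r. Qed.
Lemma lin0 : T 0 = 0.
Proof. have h := linD 0 0; rewrite addr0 in h; apply: (@addrI _ (T 0)); by rewrite addr0 -h. Qed.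
Lemma linZ a x : T (a *: x) = a *: T x.
Proof. by rewrite -[a *: x]addr0 HT lin0 addr0. Qed.
Lemma linN x : T (- x) = - T x.
Proof. by rewrite -scaleN1r linZ scaleN1r. Qed.
Lemma linB x y : T (x - y) = T x - T y.
Proof. by rewrite linD linN. Qed.
End Lin.

Section Gen.
Variables (R : realType) (E : lmodType R[i]) (ip : E -> E -> R[i]).
Hypothesis Hip : inner_product ip.
Variables (A B As Bs : E -> E).
Hypothesis hA : forall a b, ip (A a) b = ip a (As b).
Hypothesis hB : forall a b, ip (B a) b = ip a (Bs b).
Hypothesis bAs : forall v, q ip (As v) <= q ip v.
Hypothesis bBs : forall v, q ip (Bs v) <= q ip v.
Variable T : (nat -> E) -> nat -> E.
Hypothesis hT : forall x m, T x m = A (x m) + Defs.shift (fun k => B (x k)) m.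

Lemma Re_sum n (F : nat -> R[i]) :
  complex.Re (\sum_(m < n) F m) = \sum_(m < n) complex.Re (F m).
Proof.
elim: n => [|n IH]; first by rewrite !big_ord0.
by rewrite !big_ord_recr /= ReD IH.
Qed.
Lemma Im_sum n (F : nat -> R[i]) :
  complex.Im (\sum_(m < n) F m) = \sum_(m < n) complex.Im (F m).
Proof.
elim: n => [|n IH]; first by rewrite !big_ord0.
by rewrite !big_ord_recr /= ImD IH.
Qed.

Lemma gen_adj :
  is_adjoint_on (H2inner ip) (in_H2 ip) T (fun y m => As (y m) + Bs (y m.+1)).
Proof.
move=> x y Dx Dy; split.
  have [M HM] := (inH2P Hip y).1 Dy.
  apply/(inH2P Hip); exists (4 * M) => n.
  have M0 : 0 <= M by apply: le_trans (HM 0); rewrite big_ord0.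
  apply: (@le_trans _ _ (\sum_(m < n) (2 * q ip (y m) + 2 * q ip (y m.+1)))).
    apply: ler_sum => m _; apply: le_trans (qD_le Hip _ _) _.
    by apply: lerD; apply: ler_wpM2l => //.
  rewrite big_split /= -!mulr_sumr.
  have h1 := HM n.
  have h2 : \sum_(m < n) q ip (y m.+1) <= M.
    apply: le_trans (HM n.+1); rewrite big_ord_recl /= lerDr; exact: q_ge0.
  lra.
set e := fun n => if n is k.+1 then ip (x k) (Bs (y n)) else 0.
have key n : \sum_(m < n) ip (T x m) (y m) =
             \sum_(m < n) ip (x m) (As (y m) + Bs (y m.+1)) - e n.
  elim: n => [|n IH]; first by rewrite !big_ord0 subr0.
  rewrite !big_ord_recr /= IH hT (ipDl Hip) hA (ipDr Hip).
  have -> : ip (Defs.shift (fun k => B (x k)) n) (y n) = e n.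
    by case: n {IH} => [|n] /=; rewrite ?(ip0l Hip) // hB.
  rewrite /e; ring.
have ce : tends (fun n => complex.Re (e n)) 0 /\ tends (fun n => complex.Im (e n)) 0.
  have tx := inH2_tends0 Hip Dx; have ty := inH2_tends0 Hip Dy.
  suff H : forall eps, 0 < eps -> exists N, forall n, (N <= n)%N ->
       2 * `|complex.Re (e n)| < eps /\ 2 * `|complex.Im (e n)| < eps.
    split => eps eps0; have [N HN] := H _ (mulr_gt0 (ltr0Sn _ 1) eps0);
      exists N => n Nn; have [h1 h2] := HN n Nn; rewrite subr0; lra.
  move=> eps eps0.
  have [N1 H1] := tx _ (divr_gt0 eps0 (ltr0Sn _ 1)).
  have [N2 H2] := ty _ (divr_gt0 eps0 (ltr0Sn _ 1)).
  exists (maxn N1 N2).+1 => -[//|k] /=; rewrite ltnS geq_max => /andP[k1 k2].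
  have h1 := H1 _ k1; have h2 := H2 _ (leqW k2).
  rewrite !subr0 !ger0_norm ?q_ge0 // in h1 h2.
  have b := bBs (y k.+1).
  have r1 := Re_ip_le Hip (x k) (Bs (y k.+1)).
  have r2 := Im_ip_le Hip (x k) (Bs (y k.+1)).
  split; lra.
rewrite /H2inner; congr Complex.
- apply: (limn_diff (c := fun n => complex.Re (e n))); last exact: ce.1.
  by move=> n; have := congr1 (@complex.Re R) (key n); rewrite ReD ReN (Re_sum n (fun m => ip (T x m) (y m))) (Re_sum n (fun m => ip (x m) (As (y m) + Bs (y m.+1)))).
- apply: (limn_diff (c := fun n => complex.Im (e n))); last exact: ce.2.
  by move=> n; have := congr1 (@complex.Im R) (key n); rewrite ImD ImN (Im_sum n (fun m => ip (T x m) (y m))) (Im_sum n (fun m => ip (x m) (As (y m) + Bs (y m.+1)))).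
Qed.
End Gen.

Section Gen2.
Variables (R : realType) (E : lmodType R[i]) (ip : E -> E -> R[i]).
Hypothesis Hip : inner_product ip.
Variables (A B : E -> E).
Hypothesis bA : forall v, q ip (A v) <= q ip v.
Hypothesis bB : forall v, q ip (B v) <= q ip v.
Variable T : (nat -> E) -> nat -> E.
Hypothesis hT : forall x m, T x m = A (x m) + Defs.shift (fun k => B (x k)) m.

Lemma gen_inH2 x : in_H2 ip x -> in_H2 ip (T x).
Proof.
move=> /(inH2P Hip) [M HM]; apply/(inH2P Hip); exists (4 * M) => n.
have M0 : 0 <= M by apply: le_trans (HM 0); rewrite big_ord0.
apply: (@le_trans _ _ (\sum_(m < n) (2 * q ip (x m) + 2 * q ip (Defs.shift x m)))).
  apply: ler_sum => m _; rewrite hT; apply: le_trans (qD_le Hip _ _) _.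
  apply: lerD; apply: ler_wpM2l => //.
  by case: (m : nat) => [|k] /=; [by [] | exact: bB].
rewrite big_split /= -!mulr_sumr.
have h2 : \sum_(m < n) q ip (Defs.shift x m) <= M.
  case: n => [|n]; first by rewrite big_ord0.
  by rewrite big_ord_recl /= (q0 Hip) add0r; exact: HM.
have h1 := HM n.
lra.
Qed.
End Gen2.

Section Ops.
Variables (R : realType) (E : lmodType R[i]) (ip : E -> E -> R[i]).
Hypothesis Hip : inner_product ip.
Variables (U Us P : E -> E).
Hypothesis HU : unitary_with_adjoint ip U Us.
Hypothesis HP : orth_projection ip P.

Lemma linU : is_linear_op U. Proof. by case: HU. Qed.
Lemma linP : is_linear_op P. Proof. by case: HP. Qed.
Lemma UUs x : U (Us x) = x. Proof. by case: HU. Qed.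
Lemma UsU x : Us (U x) = x. Proof. by case: HU. Qed.
Lemma PP x : P (P x) = P x. Proof. by case: HP. Qed.
Lemma adjU a b : ip (U a) b = ip a (Us b).
Proof. by case: HU => _ h _ _; case: (h a b I I). Qed.
Lemma adjP a b : ip (P a) b = ip a (P b).
Proof. by case: HP => _ _ h; case: (h a b I I). Qed.
Lemma adjUs a b : ip (Us a) b = ip a (U b).
Proof. by rewrite (ip_sym Hip) -adjU -(ip_sym Hip). Qed.
Lemma Us0 : Us 0 = 0.
Proof. have h := UsU 0; rewrite (lin0 linU) in h; exact: h. Qed.
Lemma PPc v : P (v - P v) = 0.
Proof. by rewrite (linB linP) PP subrr. Qed.
Lemma adjPc a b : ip (a - P a) b = ip a (b - P b).
Proof. by rewrite (ipBl Hip) adjP (ipBr Hip). Qed.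
Lemma qU v : q ip (U v) = q ip v.
Proof. by rewrite /q adjU UsU. Qed.
Lemma qUs v : q ip (Us v) = q ip v.
Proof. by rewrite -{2}(UUs v) qU. Qed.
Lemma qP_split v : q ip v = q ip (P v) + q ip (v - P v).
Proof.
rewrite -{1}(subrKC (P v) v) (qD Hip (P v) (v - P v)) adjP PPc (ip0r Hip) /=; lra.
Qed.
Lemma qP_le v : q ip (P v) <= q ip v.
Proof. rewrite (qP_split v) lerDl; exact: q_ge0. Qed.
Lemma qPc_le v : q ip (v - P v) <= q ip v.
Proof. rewrite (qP_split v) lerDr; exact: q_ge0. Qed.

Lemma nondeg u w : (forall e, ip e u = ip e w) -> u = w.
Proof.
move=> h; apply/eqP; rewrite -subr_eq0; apply/eqP; apply: (q_eq0 Hip).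
by rewrite /q (ipBr Hip) h subrr.
Qed.

Definition Ts1 (y : nat -> E) m := U (P (y m)) + U (y m.+1 - P (y m.+1)).
Definition Ts2 (y : nat -> E) m := (Us (y m) - P (Us (y m))) + P (Us (y m.+1)).

Lemma V1_adj : is_adjoint_on (H2inner ip) (in_H2 ip) (BCL_V1 Us P) Ts1.
Proof.
apply: (gen_adj Hip (A := fun v => P (Us v)) (B := fun v => Us v - P (Us v)) (As := fun b => U (P b)) (Bs := fun b => U (b - P b))) => //.
- by move=> a b; rewrite adjP adjUs.
- by move=> a b; rewrite adjPc adjUs.
- by move=> v; rewrite qU qP_le.
- by move=> v; rewrite qU qPc_le.
Qed.

Lemma V1_inH2 x : in_H2 ip x -> in_H2 ip (BCL_V1 Us P x).
Proof.
apply: (gen_inH2 Hip (A := fun v => P (Us v)) (B := fun v => Us v - P (Us v))) => //.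
- by move=> v; rewrite -(qUs v) qP_le.
- by move=> v; rewrite -(qUs v) qPc_le.
Qed.

Lemma V2E x m : BCL_V2 U P x m =
  U (x m - P (x m)) + Defs.shift (fun k => U (P (x k))) m.
Proof.
rewrite /BCL_V2 (linD linU) addrC; congr (_ + _).
by case: m => [|m] //=; rewrite (lin0 linU).
Qed.

Lemma V2_adj : is_adjoint_on (H2inner ip) (in_H2 ip) (BCL_V2 U P) Ts2.
Proof.
apply: (gen_adj Hip (A := fun v => U (v - P v)) (B := fun v => U (P v)) (As := fun b => Us b - P (Us b)) (Bs := fun b => P (Us b))) => //.
- by move=> a b; rewrite adjU adjPc.
- by move=> a b; rewrite adjU adjP.
- by move=> v; rewrite -(qUs v) qPc_le.
- by move=> v; rewrite -(qUs v) qP_le.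
- exact: V2E.
Qed.

Lemma V2_inH2 x : in_H2 ip x -> in_H2 ip (BCL_V2 U P x).
Proof.
apply: (gen_inH2 Hip (A := fun v => U (v - P v)) (B := fun v => U (P v))) => //.
- by move=> v; rewrite qU qPc_le.
- by move=> v; rewrite qU qP_le.
- exact: V2E.
Qed.
End Ops.

Section Back.
Variables (R : realType) (E : lmodType R[i]) (ip : E -> E -> R[i]).
Hypothesis Hip : inner_product ip.
Variables (U Us P : E -> E).
Hypothesis HU : unitary_with_adjoint ip U Us.
Hypothesis HP : orth_projection ip P.
Variable Et : set E.
Hypothesis HE : closed_subspace ip Et.
Hypothesis RU : reducing_on ip setT U Et.
Hypothesis RP : reducing_on ip setT P Et.

Lemma Et0 : Et 0. Proof. by case: HE. Qed.
Lemma EtD x y : Et x -> Et y -> Et (x + y).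
Proof. by case: HE => _ h _ ex ey; rewrite -[x]scale1r; apply: h. Qed.
Lemma EtN x : Et x -> Et (- x).
Proof. by case: HE => _ h _ ex; rewrite -scaleN1r -[_ *: x]addr0; apply: h => //; exact: Et0. Qed.
Lemma EtB x y : Et x -> Et y -> Et (x - y).
Proof. by move=> ex ey; apply: EtD => //; apply: EtN. Qed.
Lemma EtU x : Et x -> Et (U x). Proof. by case: RU => h _; apply: h. Qed.
Lemma EtP x : Et x -> Et (P x). Proof. by case: RP => h _; apply: h. Qed.
Lemma EtUs x : Et x -> Et (Us x).
Proof.
case: RU => _ [Ts [adj hTs]] ex.
have -> : Us x = Ts x.
  apply: (nondeg Hip) => e.
  by rewrite -(adjU HU) (adj e x I I).2.
exact: hTs.
Qed.

Lemma back_V1 : reducing_on (H2inner ip) (in_H2 ip) (BCL_V1 Us P) (H2_of ip Et).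
Proof.
split.
  move=> f [Df cf]; split; first exact: (V1_inH2 Hip HU HP).
  move=> m; rewrite /BCL_V1; apply: EtD; first by apply: EtP; apply: EtUs.
  case: m => [|m] /=; first exact: Et0.
  by apply: EtB; [apply: EtUs | apply: EtP; apply: EtUs].
exists (Ts1 U P); split; first exact: (V1_adj Hip HU HP).
move=> y [Dy cy]; split; first exact: ((V1_adj Hip HU HP) y y Dy Dy).1.
move=> m; rewrite /Ts1; apply: EtD; apply: EtU; first exact: EtP.
by apply: EtB => //; exact: EtP.
Qed.

Lemma back_V2 : reducing_on (H2inner ip) (in_H2 ip) (BCL_V2 U P) (H2_of ip Et).
Proof.
split.
  move=> f [Df cf]; split; first exact: (V2_inH2 Hip HU HP).
  move=> m; rewrite /BCL_V2; apply: EtU; apply: EtD; last by apply: EtB => //; exact: EtP.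
  case: m => [|m] /=; first exact: Et0.
  exact: EtP.
exists (Ts2 Us P); split; first exact: (V2_adj Hip HU HP).
move=> y [Dy cy]; split; first exact: ((V2_adj Hip HU HP) y y Dy Dy).1.
move=> m; rewrite /Ts2; apply: EtD; last by apply: EtP; apply: EtUs.
by apply: EtB; [apply: EtUs | apply: EtP; apply: EtUs].
Qed.
End Back.

Section Delta.
Variables (R : realType) (E : lmodType R[i]) (ip : E -> E -> R[i]).
Hypothesis Hip : inner_product ip.

Definition delta (m : nat) (e : E) : nat -> E := fun k => if k == m then e else 0.

Lemma sum_single (V : zmodType) (F : nat -> V) m :
  (forall k, k != m -> F k = 0) -> forall n, (m < n)%N -> \sum_(k < n) F k = F m.
Proof.
move=> h; elim=> [//|n IH]; rewrite ltnS leq_eqVlt => /orP[/eqP mn|mn].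
  subst n; rewrite big_ord_recr /= big1 ?add0r // => i _.
  by apply: h; rewrite neq_ltn ltn_ord.
by rewrite big_ord_recr /= IH // (h n) ?addr0 // neq_ltn mn orbT.
Qed.

Lemma sum_mono (F : nat -> R) n j : (forall k, 0 <= F k) ->
  \sum_(k < n) F k <= \sum_(k < n + j) F k.
Proof.
move=> h; elim: j => [|j IH]; first by rewrite addn0.
by rewrite addnS big_ord_recr /= (le_trans IH) // lerDl.
Qed.

Lemma sum_stab (F : nat -> R) N j : (forall k, (N <= k)%N -> F k = 0) ->
  \sum_(k < N + j) F k = \sum_(k < N) F k.
Proof.
move=> h; elim: j => [|j IH]; first by rewrite addn0.
by rewrite addnS big_ord_recr /= IH h ?addr0 // leq_addr.
Qed.

Lemma fin_inH2 f N : (forall k, (N <= k)%N -> f k = 0) -> in_H2 ip f.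
Proof.
move=> h; apply/(inH2P Hip); exists (\sum_(k < N) q ip (f k)) => n.
have := sum_mono (F := fun k => q ip (f k)) n N (fun k => q_ge0 Hip (f k)).
rewrite addnC (@sum_stab (fun k => q ip (f k)) N n) //.
by move=> k Nk; rewrite h // (q0 Hip).
Qed.

Lemma delta_fin m e k : (m.+1 <= k)%N -> delta m e k = 0.
Proof. by move=> mk; rewrite /delta gtn_eqF. Qed.

Lemma delta_inH2 m e : in_H2 ip (delta m e).
Proof. apply: (fin_inH2 (N := m.+1)) => k; exact: delta_fin. Qed.

Lemma H2inner_delta m e y : H2inner ip (delta m e) y = ip e (y m).
Proof.
rewrite /H2inner.
rewrite (limn_evconst (N := m.+1) (a := complex.Re (ip e (y m)))); last first.
  move=> n mn; rewrite (@sum_single _ (fun k => complex.Re (ip (delta m e k) (y k))) m) //; first by rewrite /delta eqxx.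
  move=> k km.
  by rewrite /delta (negbTE km) (ip0l Hip).
rewrite (limn_evconst (N := m.+1) (a := complex.Im (ip e (y m)))); last first.
  move=> n mn; rewrite (@sum_single _ (fun k => complex.Im (ip (delta m e k) (y k))) m) //; first by rewrite /delta eqxx.
  move=> k km.
  by rewrite /delta (negbTE km) (ip0l Hip).
by case: (ip e (y m)).
Qed.

Lemma hnorm0 : hnorm ip 0 = 0.
Proof. by rewrite /hnorm (ip0l Hip) sqrtr0. Qed.

Lemma H2norm_delta0 d : H2norm ip (delta 0 d) = hnorm ip d.
Proof.
rewrite /H2norm (limn_evconst (N := 1) (a := hnorm ip d ^+ 2)).
  by rewrite sqrtr_sqr ger0_norm // hnorm_ge0.
move=> n n1; rewrite (@sum_single _ (fun k => hnorm ip (delta 0 d k) ^+ 2) 0) //.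
move=> k k0.
by rewrite /delta (negbTE k0) hnorm0 expr0n.
Qed.
End Delta.

Section Fwd.
Variables (R : realType) (E : lmodType R[i]) (ip : E -> E -> R[i]).
Hypothesis Hip : inner_product ip.
Variables (U Us P : E -> E).
Hypothesis HU : unitary_with_adjoint ip U Us.
Hypothesis HP : orth_projection ip P.
Variable S : set (nat -> E).
Hypothesis HS : H2_closed_subspace ip S.
Hypothesis R1 : reducing_on (H2inner ip) (in_H2 ip) (BCL_V1 Us P) S.
Hypothesis R2 : reducing_on (H2inner ip) (in_H2 ip) (BCL_V2 U P) S.

Lemma S_inH2 f : S f -> in_H2 ip f. Proof. by case: HS => h _ _ _; apply: h. Qed.
Lemma S0 : S (fun _ => 0). Proof. by case: HS. Qed.
Lemma S_lin a f g : S f -> S g -> S (fun m => a *: f m + g m).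
Proof. by case: HS => _ _ h _; apply: h. Qed.
Lemma S_V1 f : S f -> S (BCL_V1 Us P f). Proof. by case: R1 => h _; apply: h. Qed.
Lemma S_V2 f : S f -> S (BCL_V2 U P f). Proof. by case: R2 => h _; apply: h. Qed.

Lemma V2V1 x : BCL_V2 U P (BCL_V1 Us P x) = Defs.shift x.
Proof.
apply: funext => m.
set w := fun k => Us (x k) - P (Us (x k)).
have PV1 k : P (BCL_V1 Us P x k) = P (Us (x k)).
  rewrite /BCL_V1 (linD (linP HP)) (PP HP).
  case: k => [|k] /=; first by rewrite (lin0 (linP HP)) addr0.
  by rewrite (PPc HP) addr0.
have QV1 k : BCL_V1 Us P x k - P (BCL_V1 Us P x k) = Defs.shift w k.
  by rewrite PV1 /BCL_V1 [X in X - _]addrC addrK.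
rewrite /BCL_V2 QV1; case: m => [|m] /=.
  by rewrite addr0 (lin0 (linU HU)).
by rewrite PV1 /w subrKC (UUs HU).
Qed.

Lemma S_shift f : S f -> S (Defs.shift f).
Proof. by move=> sf; rewrite -V2V1; apply: S_V2; apply: S_V1. Qed.

Lemma shift_delta m (e : E) : Defs.shift (delta m e) = delta m.+1 e.
Proof. by apply: funext => -[|k]. Qed.

Lemma V1_fin x N : (forall k, (N <= k)%N -> x k = 0) ->
  forall k, (N.+1 <= k)%N -> BCL_V1 Us P x k = 0.
Proof.
move=> h [//|k] Nk; rewrite /BCL_V1 /= !h ?(ltnW Nk) //.
by rewrite (Us0 HU) (lin0 (linP HP)) subrr addr0.
Qed.

Lemma S_back f : S f -> S (fun m => f m.+1).
Proof.
move=> sf; have Df := S_inH2 sf.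
case: R1 => _ [T1 [adj1 inv1]]; case: R2 => _ [T2 [adj2 inv2]].
suff <- : T1 (T2 f) = (fun m => f m.+1) by apply: inv1; apply: inv2.
apply: funext => m; apply: (nondeg Hip) => e.
have Dd := delta_inH2 Hip m e.
have D2 : in_H2 ip (T2 f) := (adj2 _ _ Dd Df).1.
have DV1 : in_H2 ip (BCL_V1 Us P (delta m e)).
  apply: (fin_inH2 Hip (N := m.+2)); apply: V1_fin => k; exact: delta_fin.
rewrite -(H2inner_delta Hip) -(adj1 _ _ Dd D2).2 -(adj2 _ _ DV1 Df).2.
by rewrite V2V1 shift_delta (H2inner_delta Hip).
Qed.

Definition Et : set E := fun e => S (delta 0 e).

Lemma S_comp0 f : S f -> Et (f 0).
Proof.
move=> sf; rewrite /Et.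
have -> : delta 0 (f 0) = (fun k => (-1) *: Defs.shift (fun m => f m.+1) k + f k).
  apply: funext => -[|k] /=; first by rewrite scaler0 add0r.
  by rewrite scaleN1r addNr.
by apply: S_lin => //; apply: S_shift; apply: S_back.
Qed.

Lemma S_comp f m : S f -> Et (f m).
Proof.
elim: m f => [|m IH] f sf; first exact: S_comp0.
exact: (IH (fun k => f k.+1) (S_back sf)).
Qed.

Lemma S_delta m (e : E) : Et e -> S (delta m e).
Proof.
move=> ee; elim: m => [//|m IH].
by rewrite -shift_delta; apply: S_shift.
Qed.

Lemma Et0' : Et 0.
Proof.
rewrite /Et; have -> : delta 0 (0 : E) = (fun _ : nat => (0 : E)) by apply: funext => -[|k].
exact: S0.
Qed.

Lemma EtZD a x y : Et x -> Et y -> Et (a *: x + y).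
Proof.
move=> ex ey; rewrite /Et.
rewrite (_ : delta 0 (a *: x + y) = fun m => a *: delta 0 x m + delta 0 y m).
  exact: S_lin.
by apply: funext => -[|k] //=; rewrite scaler0 addr0.
Qed.

Lemma EtD' x y : Et x -> Et y -> Et (x + y).
Proof. by move=> ex ey; rewrite -[x]scale1r; apply: EtZD. Qed.

Lemma EtU' e : Et e -> Et (U e).
Proof.
move=> ee; have sV := S_V2 (S_delta 0 ee).
have h0 := S_comp 0 sV; have h1 := S_comp 1 sV.
rewrite /BCL_V2 /delta /= add0r in h0.
rewrite /BCL_V2 /delta /= (lin0 (linP HP)) subrr addr0 in h1.
have := EtD' h0 h1; by rewrite -(linD (linU HU)) subrK.
Qed.

Lemma EtUs' e : Et e -> Et (Us e).
Proof.
move=> ee; have sV := S_V1 (S_delta 0 ee).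
have h0 := S_comp 0 sV; have h1 := S_comp 1 sV.
rewrite /BCL_V1 /delta /= addr0 in h0.
rewrite /BCL_V1 /delta /= (Us0 HU) (lin0 (linP HP)) add0r in h1.
have := EtD' h0 h1; by rewrite subrKC.
Qed.

Lemma EtP' e : Et e -> Et (P e).
Proof.
move=> ee; have sV := S_V1 (S_delta 0 (EtU' ee)).
have h0 := S_comp 0 sV.
by rewrite /BCL_V1 /delta /= addr0 (UsU HU) in h0.
Qed.

Lemma Et_closed : closed_subspace ip Et.
Proof.
split; [exact: Et0' | exact: EtZD |].
move=> u x hu hx; case: HS => _ _ _ hcl.
apply: (hcl (fun k => delta 0 (u k)) (delta 0 x)) => //; first exact: delta_inH2.
move=> eps eps0; have [N HN] := hx eps eps0; exists N => k Nk.
have -> : (fun m => delta 0 (u k) m - delta 0 x m) = delta 0 (u k - x).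
  by apply: funext => -[|m] //=; rewrite subrr.
by rewrite (H2norm_delta0 Hip); apply: HN.
Qed.

Lemma qN v : q ip (- v) = q ip v.
Proof. by rewrite /q (ipNl Hip) (ipNr Hip) opprK. Qed.

Lemma H2_sub : H2_of ip Et `<=` S.
Proof.
move=> f [Df cf].
pose tr k := fun m => if (m < k)%N then f m else 0.
have Str k : S (tr k).
  elim: k => [|k IH].
    rewrite (_ : tr 0 = fun _ => 0); first exact: S0.
    by apply: funext => m; rewrite /tr ltn0.
  rewrite (_ : tr k.+1 = fun m => 1 *: delta k (f k) m + tr k m).
    by apply: S_lin => //; apply: S_delta.
  apply: funext => m; rewrite /tr /delta scale1r.
  case: (ltngtP m k) => h.
  - by rewrite add0r ltnS ltnW.
  - by rewrite addr0 ltnS leqNgt h.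
  - by rewrite h ltnSn addr0.
case: HS => _ _ _ hcl; apply: (hcl tr f Str Df).
have hc : cvgn (fun n => \sum_(m < n) q ip (f m)).
  by have := inH2_cvg Hip Df; rewrite seriesEord.
set L := limn _ in hc.
set s := fun n => \sum_(m < n) q ip (f m).
have ts : tends s L by apply/tendsP.
move=> eps eps0.
have e20 : 0 < eps ^+ 2 by rewrite exprn_gt0.
have [N HN] := ts _ e20; exists N => k Nk.
have gk j : \sum_(m < (k + j)%N) hnorm ip (tr k m - f m) ^+ 2 = s (k + j)%N - s k.
  elim: j => [|j IH].
    rewrite !addn0 subrr big1 // => i _.
    by rewrite /tr ltn_ord subrr (hnorm0 Hip) expr0n.
  rewrite addnS big_ord_recr /= IH /s big_ord_recr /= /tr.
  rewrite ltnNge leq_addr /= sub0r (hnorm2 Hip) qN; ring.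
have lk : limn (fun n => \sum_(m < n) hnorm ip (tr k m - f m) ^+ 2) = L - s k.
  rewrite (limn_diff (v := fun n => s n - s k)
     (c := fun n => (s n - s k) - \sum_(m < n) hnorm ip (tr k m - f m) ^+ 2)).
  - apply: cvg_lim => //; apply: cvgB => //; exact: cvg_cst.
  - by move=> n; rewrite opprB addrC subrK.
  - move=> e e0; exists k => n kn; rewrite -(subnKC kn) gk subrr subr0 normr0 //.
rewrite /H2norm lk -(gtr0_norm eps0) -sqrtr_sqr ltr_sqrt //.
have := HN k Nk; rewrite ltr_norml => /andP[h _]; lra.
Qed.

Lemma S_sub : S `<=` H2_of ip Et.
Proof. by move=> f sf; split; [exact: S_inH2 | move=> m; exact: S_comp]. Qed.
End Fwd.

Theorem lemma2p1 (R : realType) (E : lmodType R[i]) (ip : E -> E -> R[i])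
  (U Us P : E -> E) (S : set (nat -> E)) :
  is_hilbert ip ->
  unitary_with_adjoint ip U Us ->
  orth_projection ip P ->
  H2_closed_subspace ip S ->
  (reducing_on (H2inner ip) (in_H2 ip) (BCL_V1 Us P) S /\
   reducing_on (H2inner ip) (in_H2 ip) (BCL_V2 U P) S)
  <->
  (exists Et : set E,
     [/\ closed_subspace ip Et,
         reducing_on ip setT U Et,
         reducing_on ip setT P Et
       & S = H2_of ip Et]).
Proof.
move=> [Hip _ _] HU HP HS; split.
- move=> [R1 R2]; exists (Et S); split.
  + exact: (Et_closed Hip HS).
  + split; first by move=> x; exact: (EtU' Hip HU HP HS R1 R2).
    exists Us; split; first by case: HU.
    by move=> x; exact: (EtUs' Hip HU HP HS R1 R2).
  + split; first by move=> x; exact: (EtP' Hip HU HP HS R1 R2).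
    exists P; split; first by case: HP.
    by move=> x; exact: (EtP' Hip HU HP HS R1 R2).
  + apply/seteqP; split; first exact: (S_sub Hip HU HP HS R1 R2).
    exact: (H2_sub Hip HU HP HS R1 R2).
- move=> [Et [HE RU RP ->]]; split.
  + exact: (back_V1 Hip HU HP HE RU RP).
  + exact: (back_V2 Hip HU HP HE RU RP).
Qed.
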